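(* Let $c\ge\lceil(2n-1)/3\rceil$ and let $\mathbf{s}_n\in\mathcal{B}(n,c,d)$ with $d=n-c$. Then $\mathbf{s}_n\in\mathcal{R}(n,c)$ if and only if $\mathbf{s}_{[d:n]}=(s_d,\dots,s_{n-1})$ cannot be expressed as $(s_0,s_1,\dots,s_{b-1})^l$ for any aperiodic sequence $(s_0,\dots,s_{b-1})$, where $b>1$ is a proper divisor of $c$.
   Context: All sequences are binary (entries in $\mathbb{Z}_2$), $\overline{x}=x\oplus1$, $x\bmod d$ is the least nonnegative residue, and $\mathbf{a}^q$ is the concatenation of $q$ copies of $\mathbf a$. For $\mathbf{s}_n=(s_0,\dots,s_{n-1})$, $\mathbf{s}_j=(s_0,\dots,s_{j-1})$ and $\mathbf{s}_{[i:j]}=(s_i,\dots,s_{j-1})$. A length-$m$ sequence is periodic if it is the concatenation of $m/e$ copies of a length-$e$ sequence for a proper divisor $e$ of $m$, aperiodic otherwise. Right circular shift: $R^k(\mathbf{s}_n)=(s_{n-k},\dots,s_{n-1},s_0,\dots,s_{n-k-1})$, $0\le k<n$. For $c\ge\lfloor n/2\rfloor$ and $1\le d\le\min\{n-c,\lfloor n/2\rfloor\}$, $\mathcal{B}(n,c,d)$ is the set of aperiodic length-$n$ sequences $\mathbf{s}_n$ with $\mathbf{s}_d$ aperiodic and $\mathbf{s}_{c+d}=(s_0,\dots,s_{d-1})^q(s_0,\dots,s_{r-1},\overline{s_r})$, where $q=\lfloor(c+d-1)/d\rfloor$, $r=c+d-1-qd$, and $s_{c+d},\dots,s_{n-1}$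 are arbitrary. $\mathcal{B}(n,c)=\bigcup_{d=1}^{\min\{n-c,\lfloor n/2\rfloor\}}\mathcal{B}(n,c,d)$. For $\mathbf{s}_n\in\mathcal{B}(n,c,d)$, $add(\mathbf{s}_n)$ is the integer $t\ge0$ such that $s_{n-1-i}=s_{(d-1-i)\bmod d}$ for $0\le i<t$ and $s_{n-1-t}\neq s_{(d-1-t)\bmod d}$. For $\mathbf{s}_n\in\mathcal{B}(n,c)$, $E(\mathbf{s}_n)=\{R^k(\mathbf{s}_n):0\le k<n\}\cap\mathcal{B}(n,c)$, and $\mathcal{R}(n,c)$ is the set of all $\mathbf{s}\in\mathcal{B}(n,c)$ with $add(\mathbf{s})\ge add(\mathbf a)$ for every $\mathbf a\in E(\mathbf s)$ (the sequence representatives). *)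

(* Defs.v *)
From mathcomp Require Import all_boot.
Set Implicit Arguments. Unset Strict Implicit. Unset Printing Implicit Defensive.

(* Binary sequences are represented as [seq bool]; index i is [nth false s i]. *)

Definition rep (a : seq bool) (q : nat) : seq bool := flatten (nseq q a).

Definition periodic (s : seq bool) : Prop :=
  exists e, [/\ 0 < e, e < size s, e %| size s & s = rep (take e s) (size s %/ e)].

Definition aperiodic (s : seq bool) : Prop := ~ periodic s.

Definition subseqij (s : seq bool) (i j : nat) : seq bool := take (j - i) (drop i s).

(* Membership in B(n,c,d); includes the standing range conditions
   c >= floor(n/2) and 1 <= d <= min(n-c, floor(n/2)). *)
Definition inB (n c d : nat) (s : seq bool) : Prop :=
  let q := (c + d - 1) %/ d in
  let r := (c + d - 1) - q * d in
  [/\ size s = n, n./2 <= c, 1 <= d, d <= n - c & d <= n./2] /\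
  [/\ aperiodic s, aperiodic (take d s) &
      take (c + d) s = rep (take d s) q ++ (take r s ++ [:: ~~ nth false s r])].

Definition inBc (n c : nat) (s : seq bool) : Prop := exists d, inB n c d s.

(* add(s) for s in B(n,c,d): the least t >= 0 with
   s_{n-1-t} != s_{(d-1-t) mod d}; the least nonnegative residue of d-1-t
   modulo d is d-1-(t mod d).  (If no such t < n exists, the value is n.) *)
Definition add (d : nat) (s : seq bool) : nat :=
  let n := size s in
  find (fun t => nth false s (n - 1 - t) != nth false s (d - 1 - t %% d)) (iota 0 n).

Definition Rshift (k : nat) (s : seq bool) : seq bool := rotr k s.

Definition inE (n c : nat) (s a : seq bool) : Prop :=
  (exists2 k, k < n & a = Rshift k s) /\ inBc n c a.

Definition inR (n c : nat) (s : seq bool) : Prop :=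
  exists d, inB n c d s /\
    forall a d', inE n c s a -> inB n c d' a -> add d' a <= add d s.

Definition ceil_div (a b : nat) : nat := (a + b - 1) %/ b.

(* Main.v *)
Require Import Defs.
From mathcomp Require Import all_boot.
From mathcomp Require Import zify.
Set Implicit Arguments. Unset Strict Implicit. Unset Printing Implicit Defensive.

Definition per (f : nat -> bool) (p N : nat) := forall i, i + p < N -> f i = f (i + p).

Lemma per_mono f p N M : M <= N -> per f p N -> per f p M.
Proof. move=> hMN h i hi; apply: h; lia. Qed.

Lemma per_mod f p N : 0 < p -> per f p N -> forall i, i < N -> f i = f (i %% p).
Proof.
move=> p0 hp i; elim/ltn_ind: i => i IH hi.
case: (ltnP i p) => hip; first by rewrite modn_small.
have e : i = (i - p) + p by lia.
rewrite e -(hp (i - p)); last by lia.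
rewrite modnDr; apply: IH; lia.
Qed.

Lemma per_eqmod f p N : 0 < p -> per f p N -> forall i j, i < N -> j < N -> i %% p = j %% p -> f i = f j.
Proof. move=> p0 hp i j hi hj e; by rewrite (per_mod p0 hp hi) (per_mod p0 hp hj) e. Qed.

Lemma FW_aux n : forall p q f N, p + q <= n -> 0 < p -> 0 < q -> p + q <= N + gcdn p q ->
  per f p N -> per f q N -> per f (gcdn p q) N.
Proof.
elim: n => [|n IH] p q f N hn p0 q0 hN hp hq; first by lia.
wlog hpq : p q p0 q0 hn hN hp hq / p <= q.
  move=> H; case: (leqP p q) => h; first exact: H.
  rewrite gcdnC; apply: H => //; [lia | by rewrite gcdnC; lia | lia].
case: (ltngtP p q) => h; last by rewrite h gcdnn.
  2: lia.
set g := gcdn p q.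
have gq : gcdn p (q - p) = g.
  by rewrite /g -{2}(subnK (ltnW h)) gcdnDr.
have g0 : 0 < g by rewrite /g gcdn_gt0 p0.
have gdvd : g %| q - p by apply: dvdn_sub; [apply: dvdn_gcdr | apply: dvdn_gcdl].
have gle : g <= q - p by apply: dvdn_leq => //; lia.
have hp' : per f p (N - p) by apply: per_mono hp; lia.
have hqp : per f (q - p) (N - p).
  move=> i hi.
  rewrite (hq i); last by lia.
  rewrite (hp (i + (q - p))); last by lia.
  by congr f; lia.
have IH' := IH p (q - p) f (N - p).
rewrite gq in IH'.
have hg : per f g (N - p) by apply: IH' => //; lia.
move=> i hi.
have gp : g %| p by apply: dvdn_gcdl.
rewrite (per_mod p0 hp (i:=i)); last by lia.
rewrite (per_mod p0 hp (i:=i+g)); last by lia.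
have hpN : p <= N - p by lia.
rewrite (per_mod g0 hg (i := i %% p)); last by have := ltn_pmod i p0; lia.
rewrite (per_mod g0 hg (i := (i + g) %% p)); last by have := ltn_pmod (i+g) p0; lia.
by rewrite !modn_dvdm // modnDr.
Qed.

Lemma FW p q f N : 0 < p -> 0 < q -> p + q <= N + gcdn p q ->
  per f p N -> per f q N -> forall i j, i < N -> j < N -> i %% gcdn p q = j %% gcdn p q -> f i = f j.
Proof.
move=> p0 q0 hN hp hq; apply: per_eqmod; first by rewrite gcdn_gt0 p0.
exact: (@FW_aux (p + q)).
Qed.

Lemma repS (a : seq bool) q : rep a q.+1 = a ++ rep a q.
Proof. by []. Qed.

Lemma size_rep (a : seq bool) q : size (rep a q) = q * size a.
Proof. elim: q => [|q IH] //; by rewrite repS size_cat IH mulSn. Qed.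

Lemma nth_rep (a : seq bool) q i : 0 < size a -> i < q * size a ->
  nth false (rep a q) i = nth false a (i %% size a).
Proof.
move=> a0; elim: q i => [|q IH] i hi; first by lia.
rewrite repS nth_cat; case: ifP => h; first by rewrite modn_small.
rewrite IH; last by lia.
have e : i = (i - size a) + size a by lia.
by rewrite {2}e modnDr.
Qed.

Lemma mod_of_range i q d : q * d <= i -> i < q * d + d -> i %% d = i - q * d.
Proof.
move=> h1 h2; have e : i = q * d + (i - q * d) by lia.
rewrite {1}e modnMDl modn_small //; lia.
Qed.

Lemma inB_dec n c d s : inB n c d s ->
  [/\ size s = n, n./2 <= c, 1 <= d, d <= n - c & d <= n./2] /\
  [/\ aperiodic s, aperiodic (take d s),
      (forall i, i < c + d - 1 -> nth false s i = nth false s (i %% d)) &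
      nth false s (c + d - 1) != nth false s ((c + d - 1) %% d)].
Proof.
case=> [[hs h1 h2 h3 h4] [ap1 ap2 ht]]; split => //.
set q := (c + d - 1) %/ d in ht; set r := (c + d - 1) - q * d in ht.
have hdm := divn_eq (c + d - 1) d.
have hmod := ltn_pmod (c + d - 1) h2.
have hr : r = (c + d - 1) %% d by rewrite /r /q; lia.
have hcd : c + d <= n by lia.
have szd : size (take d s) = d by rewrite size_take; case: ifP => //; lia.
have szr : size (take r s) = r by rewrite size_take; case: ifP => //; lia.
have szq : size (rep (take d s) q) = q * d by rewrite size_rep szd.
have key : forall i, i < c + d -> nth false s i =
   nth false (rep (take d s) q ++ (take r s ++ [:: ~~ nth false s r])) i.
  by move=> i hi; rewrite -ht nth_take.
have qd : q * d + r = c + d - 1 by rewrite hr /q; lia.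
split => //.
- move=> i hi; rewrite key; last by lia.
  rewrite nth_cat szq; case: ifP => hq.
    rewrite (@nth_rep (take d s) q i) szd //.
    by rewrite nth_take // ltn_pmod.
  rewrite nth_cat szr; case: ifP => hr2; last by lia.
  rewrite nth_take; last by lia.
  congr nth; rewrite (@mod_of_range i q d) //; lia.
- rewrite key; last by lia.
  rewrite nth_cat szq ifF; last by lia.
  rewrite nth_cat szr ifF; last by lia.
  have -> : c + d - 1 - q * d - r = 0 by lia.
  by rewrite /= -hr; case: (nth false s r).
Qed.

Lemma nth_rotr (s : seq bool) k p : k < size s -> p < size s ->
  nth false (rotr k s) p = if p < k then nth false s (size s - k + p) else nth false s (p - k).
Proof.
move=> hk hp; rewrite /rotr /rot nth_cat size_drop.
have -> : size s - (size s - k) = k by lia.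
case: ifP => h; first by rewrite nth_drop.
rewrite nth_take //; lia.
Qed.

Lemma mod_to_per f p M : 0 < p -> (forall i, i < M -> f i = f (i %% p)) -> per f p M.
Proof. move=> p0 h i hi; rewrite h ?(h (i + p)); try lia; by rewrite modnDr. Qed.

Lemma ceil_bound n c : 0 < n -> ceil_div (2 * n - 1) 3 <= c -> 2 * n <= 3 * c + 1.
Proof.
rewrite /ceil_div => n0 h.
have := divn_eq (2 * n - 1 + 3 - 1) 3; have := ltn_pmod (2 * n - 1 + 3 - 1) (isT : 0 < 3).
lia.
Qed.

Lemma mod_eq1 g x y : 0 < x -> 0 < y -> g %| x -> g %| y -> (x - 1) %% g = (y - 1) %% g.
Proof.
move=> x0 y0 gx gy; apply/eqP; rewrite -(eqn_modDr 1) !subnK //.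
by rewrite (eqP gx) (eqP gy).
Qed.

Lemma rhs_part n c s : ceil_div (2*n-1) 3 <= c -> inB n c (n-c) s ->
  ~ (exists b l : nat,
       [/\ 1 < b, b %| c, b < c, aperiodic (take b s) &
           subseqij s (n - c) n = rep (take b s) l]).
Proof.
move=> hceil hB [b [l [b1 bc bltc _ hsub]]].
have [[hs _ d1 dle _] [_ _ Pd def]] := inB_dec hB.
set d := n - c in d1 dle Pd def hsub.
have n0 : 0 < n by lia.
have hcb := ceil_bound n0 hceil.
have cd : c + d = n by rewrite /d; lia.
set f := nth false s in Pd def.
have szsub : size (subseqij s d n) = c.
  rewrite /subseqij size_take size_drop; case: ifP; lia.
have szb : size (take b s) = b by rewrite size_take; case: ifP => //; lia.
have hc : c = l * b by rewrite -szsub hsub size_rep szb.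
have hsh : forall i, i < c -> f (d + i) = f (i %% b).
  move=> i hi.
  have e1 : f (d + i) = nth false (subseqij s d n) i.
    by rewrite /subseqij nth_take ?nth_drop //; lia.
  rewrite e1 hsub (@nth_rep (take b s) l i) szb; last by lia.
  - by rewrite nth_take // ltn_pmod //; lia.
  - lia.
have d0 : 0 < d by lia.
have b0 : 0 < b by lia.
have Pb : forall i, i < c - 1 -> f i = f (i %% b).
  move=> i hi; rewrite -hsh; last by lia.
  rewrite Pd; last by lia.
  rewrite (Pd (d + i)); last by lia.
  by rewrite addnC modnDr.
have perb : per f b (c - 1) by apply: mod_to_per.
have perd : per f d (c - 1).
  apply: mod_to_per => // i hi; apply: Pd; lia.
have l2 : 2 <= l.
  case: (ltnP l 2) => // hl; have : l * b <= 1 * b by rewrite leq_mul2r; lia.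
  lia.
have hbd : b + d <= c.
  have : 2 * b = c \/ 3 * b <= c.
    case: (ltngtP l 2) => hl; [lia| |by left; rewrite hc hl mulnC].
    by right; rewrite hc leq_mul2r hl orbT.
  lia.
set g := gcdn b d.
have g0 : 0 < g by rewrite gcdn_gt0 b0.
have FWc := FW b0 d0 (N := c - 1) _ perb perd.
have gb : g %| b by apply: dvdn_gcdl.
have gd : g %| d by apply: dvdn_gcdr.
have gc : g %| c by rewrite hc; apply: dvdn_mull.
have e1 : f (c + d - 1) = f (b - 1).
  have -> : c + d - 1 = d + (c - 1) by lia.
  rewrite hsh; last by lia.
  congr f; rewrite (@mod_of_range (c-1) (l-1) b) ?mulnBl; try lia.
have e2 : f (b - 1) = f ((c + d - 1) %% d).
  apply: FWc; first by lia.
  - lia.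
  - have := ltn_pmod (c + d - 1) d0; lia.
  - rewrite -/g modn_dvdm //; apply: mod_eq1; try lia; by apply: dvdn_add.
by move: def; rewrite e1 e2 eqxx.
Qed.

Lemma modB_dvd g x N : g %| x -> x <= N -> (N - x) %% g = N %% g.
Proof. move=> gx hx; by rewrite -{2}(subnK hx) -modnDmr (eqP gx) addn0. Qed.

Lemma per_of_take (s : seq bool) d g : 0 < g -> g < d -> g %| d -> d <= size s ->
  per (nth false s) g d -> periodic (take d s).
Proof.
move=> g0 gd gdvd ds hp.
have szt : size (take d s) = d by rewrite size_take; case: ifP => //; lia.
exists g; rewrite szt; split => //.
have szg : size (take g (take d s)) = g by rewrite size_take szt; case: ifP => //; lia.
apply: (@eq_from_nth _ false); first by rewrite size_rep szg szt divnK.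
move=> i; rewrite szt => hi.
rewrite (@nth_rep (take g (take d s)) (d %/ g) i) szg //; last by rewrite divnK.
rewrite nth_take ?ltn_pmod // nth_take ?nth_take //; try (have := ltn_pmod i g0; lia).
exact: (per_mod g0 hp).
Qed.

Definition gcd_is p q g := gcdn p q = g.
Definition dv a b := a %| b.

Lemma FWg p q g f N : gcd_is p q g -> 0 < p -> 0 < q -> p + q <= N + g ->
  per f p N -> per f q N -> forall i j, i < N -> j < N -> i %% g = j %% g -> f i = f j.
Proof. rewrite /gcd_is => <-; exact: FW. Qed.

Ltac clear_bool := repeat match goal with
  | H : @eq bool _ _ |- _ => clear H
  | H : is_true (negb (@eq_op _ (?f _) (?g _))) |- _ => clear H
  end.
Ltac slia := clear_bool; lia.

Lemma core_abs (f fa : nat -> bool) n c d d' k N :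
  n = c + d -> 0 < d -> d + 1 <= c -> 2 * d <= c + 1 -> 0 < d' -> d' <= d -> k < n ->
  N = c + d' - 1 ->
  per f d (n - 1) -> f (n - 1) != f (n - 1 - d) ->
  per fa d' N -> fa N != fa (N - d') ->
  (forall p, p < n -> fa p = if p < k then f (n - k + p) else f (p - k)) ->
  (forall g, 0 < g -> g < d -> g %| d -> per f g d -> False) ->
  k = 0 /\ d' = d.
Proof.
move=> hn d0 hcd hcb d'0 dle hk hN perd def' perA brk' hfa prim.
subst n; have hN' : N + 1 = c + d' by slia.
clear hN.
have g0 : 0 < gcdn d d' by rewrite gcdn_gt0 d0.
have gd : gcdn d d' %| d by apply: dvdn_gcdl.
have gd' : gcdn d d' %| d' by apply: dvdn_gcdr.
have gle : gcdn d d' <= d' by apply: dvdn_leq.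
have gdd : d' = d -> gcdn d d' = d by move=> ->; rewrite gcdnn.
have Eg : gcd_is d d' (gcdn d d') by [].
move: (gcdn d d') Eg g0 gd gd' gle gdd => g Eg g0 gd gd' gle gdd.
have {}gd : dv g d by []. have {}gd' : dv g d' by [].
have cong : forall M, d <= M -> d' <= M -> (M - d) %% g = (M - d') %% g.
  by move=> M h1 h2; rewrite !modB_dvd.
have gap : forall m, m + N + 1 < (c + d) -> (forall p, p <= N -> fa p = f (m + p)) -> False.
  move=> m hm hfm.
  have perh : per fa d (N + 1).
    move=> i hi; rewrite (hfm i) ?(hfm (i + d)); [|slia|slia].
    rewrite addnA; apply: perd; slia.
  have hb : d + d' <= N + g by slia.
  have FWc := FWg Eg d0 d'0 hb (per_mono (leq_addr 1 N) perh) perA.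
  have e1 : fa N = fa (N - d).
    have e : N = (N - d) + d by slia.
    by rewrite {1}e -perh; slia.
  move/negP: brk'; apply; rewrite e1; apply/eqP; apply: FWc; [slia|slia|].
  apply: cong; slia.
case: (posnP k) => hk0.
  case: (ltngtP d' d) => hdd.
  - exfalso; apply: (gap 0); first by slia.
    by move=> p hp; rewrite hfa ?hk0 ?ltn0 ?subn0 // ?add0n; slia.
  - slia.
  - by [].
exfalso.
case: (ltnP (N + 1) k) => hkN.
  apply: (gap ((c + d) - k)); first by slia.
  by move=> p hp; rewrite hfa ?ifT //; slia.
case: k hk hfa hk0 hkN => [//|L] hk hfa hk0 hkN.
have hfaA : forall p, p < L.+1 -> fa p = f (c + d - L.+1 + p) by move=> p hp; rewrite hfa ?ifT //; slia.
have hfaB : forall p, L.+1 <= p -> p < (c + d) -> fa p = f (p - L.+1) by move=> p h1 h2; rewrite hfa ?ifF //; slia.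
have hfaB' : forall j, j + L.+1 < (c + d) -> fa (j + L.+1) = f j.
  by move=> j hj; rewrite hfaB ?addnK //; slia.
have hx : fa L = f ((c + d) - 1) by rewrite hfaA; [congr f|]; slia.
case: (ltngtP L N) => hLN; last first.
- (* defect at the break *)
  case: (ltngtP d' d) => hdd; [|slia|slia].
  have perh : per fa d N.
    move=> i hi; rewrite !hfaA; try slia.
    rewrite addnA; apply: perd; slia.
  have hb : d + d' <= N + g by slia.
  have FWc := FWg Eg d0 d'0 hb perh perA.
  have gltd : g < d by slia.
  apply: (prim (g)) => // i hi.
  have e1 : f i = fa (i + d').
    rewrite hfaA; last by slia.
    rewrite (perd i); last by slia.
    by congr f; slia.
  have e2 : f (i + g) = fa (i + g + d').
    rewrite hfaA; last by slia.
    rewrite (perd (i + g)); last by slia.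
    by congr f; slia.
  rewrite e1 e2; apply: FWc; [slia|slia|].
  by rewrite -addnA addnCA modnDl.
- slia.
- (* hard case: defect strictly inside the window *)
  case: (ltnP L d') => hLd'.
  +
    have hdd : d + d' <= (N - L.+1) + g.
      case: (ltngtP d' d) => hdd; [slia | slia |].
      by rewrite (gdd hdd); slia.
    have perdR : per f d (N - L.+1) by apply: per_mono perd; slia.
    have perd'R : per f d' (N - L.+1).
      move=> i hi.
      rewrite -(hfaB' i); last by slia.
      rewrite -(hfaB' (i + d')); last by slia.
      rewrite perA; last by slia.
      by congr fa; slia.
    have FWc := FWg Eg d0 d'0 hdd perdR perd'R.
    have e1 : fa N = f (N - L.+1) by rewrite hfaB; slia.
    have e2 : fa (N - d') = f (N - L.+1 - d') by rewrite hfaB; [congr f| |]; slia.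
    have e3 : f (N - L.+1) = f (N - L.+1 - d).
      have e : N - L.+1 = (N - L.+1 - d) + d by slia.
      by rewrite {1}e -perd; slia.
    move/negP: brk'; apply; rewrite e1 e2 e3; apply/eqP; apply: FWc; [slia|slia|].
    apply: cong; slia.
  case: (leqP (d + d') (L + g)) => hLg.
  +
    have perdL : per fa d L.
      move=> i hi; rewrite !hfaA; try slia.
      rewrite addnA; apply: perd; slia.
    have hb : d + d' <= L + g by slia.
    have FWc := FWg Eg d0 d'0 hb perdL (per_mono (ltnW hLN) perA).
    have e1 : fa L = fa (L - d').
      have e : L = (L - d') + d' by slia.
      by rewrite {1}e -perA; slia.
    have e2 : fa (L - d) = f ((c + d) - 1 - d) by rewrite hfaA; [congr f|]; slia.
    move/negP: def'; apply; rewrite -hx e1 -e2; apply/eqP; apply: FWc; [slia|slia|].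
    apply/esym; apply: cong; slia.
  have hdd : d' < d.
    case: (ltngtP d' d) => hdd; [slia | slia |].
    by move: hLg; rewrite (gdd hdd); slia.
  have e1 : fa L = f ((c + d) - 1 - d').
    have e : L = (L - d') + d' by slia.
    rewrite {1}e -perA; last by slia.
    by rewrite hfaA; [congr f|]; slia.
  case: (leqP (d + d' + 1) c) => hc.
  * have e2 : f (c - d' - 1 - d) = f (c - d' - 1 - d + d').
      rewrite -(hfaB' (c - d' - 1 - d)); last by slia.
      rewrite -(hfaB' (c - d' - 1 - d + d')); last by slia.
      rewrite perA; last by slia.
      by congr fa; slia.
    have e3 : f ((c + d) - 1 - d') = f (c - d' - 1 - d).
      rewrite (perd (c - d' - 1 - d)); last by slia.
      rewrite (perd (c - d' - 1 - d + d)); last by slia.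
      by congr f; slia.
    have e4 : f (c - d' - 1 - d + d') = f ((c + d) - 1 - d).
      rewrite (perd (c - d' - 1 - d + d')); last by slia.
      by congr f; slia.
    by move/negP: def'; apply; rewrite -hx e1 e3 e2 e4.
  * have e2 : fa L = f (d' - 1).
      rewrite perA; last by slia.
      by rewrite hfaB; [congr f| |]; slia.
    have e3 : f ((c + d) - 1 - d) = f (d' - 1).
      rewrite (perd (d' - 1)); last by slia.
      by congr f; slia.
    by move/negP: def'; apply; rewrite -hx e2 e3.
Qed.

Lemma add0 d' (a : seq bool) : 0 < size a ->
  nth false a (size a - 1) != nth false a (d' - 1) -> add d' a = 0.
Proof.
move=> a0 h; rewrite /add; case: (size a) a0 h => [//|m] _ h /=.
by rewrite mod0n !subn0 h.
Qed.

Lemma lhs_part n c s : ceil_div (2*n-1) 3 <= c -> inB n c (n-c) s -> inR n c s.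
Proof.
move=> hceil hB.
have [[hs _ d1 dle _] [_ apd Pd def]] := inB_dec hB.
have n0 : 0 < n by lia.
have hcb := ceil_bound n0 hceil.
exists (n - c); split => // a d' [[k hk ->] _] hA.
have [[hsa _ d'1 d'le _] [_ _ Pa brk]] := inB_dec hA.
case: (leqP (n - c + 1) c) => hcd; last first.
  have hn2 : n = 2 by lia.
  have hc1 : c = 1 by lia.
  have hd' : d' = 1 by lia.
  rewrite add0 //; first by rewrite hsa; lia.
  rewrite hsa hn2 hd'; move: brk; rewrite hc1 hd' /=.
  by [].
have [-> ->] : k = 0 /\ d' = n - c.
  apply: (@core_abs (nth false s) (nth false (rotr k s)) n c (n - c) d' k (c + d' - 1)); try lia.
  - apply: mod_to_per; first by lia.
    move=> i hi; apply: Pd; lia.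
  - have e : (n - 1 - (n - c)) %% (n - c) = (c + (n - c) - 1) %% (n - c).
      by rewrite modB_dvd ?dvdnn; (try congr modn); lia.
    have e0 : nth false s (n - 1 - (n - c)) = nth false s ((c + (n - c) - 1) %% (n - c)).
      by rewrite (Pd (n - 1 - (n - c))) ?e //; lia.
    have e1 : nth false s (n - 1) = nth false s (c + (n - c) - 1) by congr nth; lia.
    by rewrite e0 e1.
  - by apply: mod_to_per.
  - rewrite (Pa (c + d' - 1 - d')); last by lia.
    by rewrite modB_dvd ?dvdnn //; lia.
  - by move=> p hp; rewrite nth_rotr ?hs.
  - move=> g g0 gd gdvd hp; apply: apd.
    apply: (per_of_take g0 gd gdvd) => //; lia.
by rewrite /Rshift /rotr subn0 -hs rot_size.
Qed.

Theorem proposition1 (n c : nat) (s : seq bool) :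
  ceil_div (2 * n - 1) 3 <= c ->
  inB n c (n - c) s ->
  inR n c s <->
  ~ (exists b l : nat,
       [/\ 1 < b, b %| c, b < c, aperiodic (take b s) &
           subseqij s (n - c) n = rep (take b s) l]).
Proof.
move=> h1 h2; split=> _; [exact: rhs_part | exact: lhs_part].
Qed.
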